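(* For every integer $n\ge1$, the set $\mathcal{GL}^n$ of $n\times n$ Gram-Lorentz matrices is convex if and only if $n\le 2$.
   Context: The $m$-dimensional Lorentz cone is $\mathcal{L}_m:=\{(c,x)\in\mathbb{R}\times\mathbb{R}^{m-1}: c\ge\|x\|\}$ (Euclidean norm). An $n\times n$ real symmetric matrix $X$ is Gram-Lorentz if there exist $m\ge1$ and vectors $\ell_1,\dots,\ell_n\in\mathcal{L}_m$ with $X_{ij}=\langle\ell_i,\ell_j\rangle$ for all $i,j$; $\mathcal{GL}^n$ denotes the set of such matrices. *)

(* Defs.v *)
From HB Require Import structures.
From mathcomp Require Import all_boot all_order all_algebra.
From mathcomp Require Import reals.
Set Implicit Arguments. Unset Strict Implicit. Unset Printing Implicit Defensive.
Import Order.TTheory GRing.Theory Num.Theory.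
Local Open Scope ring_scope.

(* Vectors of R^(m+1) = R x R^m, written (c, x) with c = v 0 ord0 and
   x_i = v 0 (lift ord0 i).  Indexing by m.+1 encodes the condition m >= 1
   of the paper (paper's m = our m.+1). *)
Definition lorentz_cone (R : realType) (m : nat) (v : 'rV[R]_m.+1) : Prop :=
  Num.sqrt (\sum_(i < m) (v 0 (lift ord0 i)) ^+ 2) <= v 0 ord0.

Definition rv_dot (R : realType) (m : nat) (u v : 'rV[R]_m.+1) : R :=
  \sum_(k < m.+1) u 0 k * v 0 k.

Definition gram_lorentz (R : realType) (n : nat) (X : 'M[R]_n) : Prop :=
  exists (m : nat) (l : 'I_n -> 'rV[R]_m.+1),
    (forall i, lorentz_cone (l i)) /\
    (forall i j, X i j = rv_dot (l i) (l j)).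

Definition convex_mxset (R : realType) (n : nat) (S : 'M[R]_n -> Prop) : Prop :=
  forall (X Y : 'M[R]_n) (t : R), S X -> S Y -> 0 <= t -> t <= 1 ->
    S ((1 - t) *: X + t *: Y).

(* Main.v *)
Require Import Defs.
From HB Require Import structures.
From mathcomp Require Import all_boot all_order all_algebra.
From mathcomp Require Import reals ring lra.
Import Order.TTheory GRing.Theory Num.Theory.
Local Open Scope ring_scope.
Set Implicit Arguments. Unset Strict Implicit.

Lemma quad_nonneg (R : realType) k (f g : 'I_k -> R) (x y : R) :
  0 <= x^+2 * (\sum_i f i * f i) + 2 * x * y * (\sum_i f i * g i)
       + y^+2 * (\sum_i g i * g i).
Proof.
have -> : x^+2 * (\sum_i f i * f i) + 2 * x * y * (\sum_i f i * g i)
       + y^+2 * (\sum_i g i * g i) = \sum_i (x * f i + y * g i)^+2.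
  rewrite !mulr_sumr -!big_split /=; apply: eq_bigr => i _; ring.
by apply: sumr_ge0 => i _; apply: sqr_ge0.
Qed.

Lemma dot_split (R : realType) m (u v : 'rV[R]_m.+1) :
  rv_dot u v = u 0 ord0 * v 0 ord0 +
    \sum_(i < m) u 0 (lift ord0 i) * v 0 (lift ord0 i).
Proof. by rewrite /rv_dot big_ord_recl. Qed.

Lemma cone_facts (R : realType) m (v : 'rV[R]_m.+1) :
  lorentz_cone v ->
  0 <= v 0 ord0 /\ \sum_(i < m) v 0 (lift ord0 i) * v 0 (lift ord0 i) <= v 0 ord0 ^+ 2.
Proof.
rewrite /lorentz_cone => h.
set S := \sum_(i < m) _.
have S0 : 0 <= S by apply: sumr_ge0 => i _; rewrite -expr2; apply: sqr_ge0.
have hS : \sum_(i < m) v 0 (lift ord0 i) ^+ 2 = S by apply: eq_bigr => i _; rewrite expr2.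
rewrite hS in h.
have s0 := sqrtr_ge0 S.
have := sqr_sqrtr S0.
split; first by apply: le_trans h.
nra.
Qed.

Lemma cone_dot_ge0 (R : realType) m (u v : 'rV[R]_m.+1) :
  lorentz_cone u -> lorentz_cone v -> 0 <= rv_dot u v.
Proof.
move=> /cone_facts [u0 hu] /cone_facts [v0 hv].
rewrite dot_split.
set Sa := \sum_(i < m) _ in hu.
set Sb := \sum_(i < m) _ in hv.
set Sxy := \sum_(i < m) _.
have Q := @quad_nonneg R m (fun i => u 0 (lift ord0 i)) (fun i => v 0 (lift ord0 i)).
rewrite -/Sa -/Sb -/Sxy in Q.
have Sa0 : 0 <= Sa by apply: sumr_ge0 => i _; rewrite -expr2; apply: sqr_ge0.
have Sb0 : 0 <= Sb by apply: sumr_ge0 => i _; rewrite -expr2; apply: sqr_ge0.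
have ea := sqr_sqrtr Sa0; have eb := sqr_sqrtr Sb0.
have sa0 := sqrtr_ge0 Sa; have sb0 := sqrtr_ge0 Sb.
set sa := Num.sqrt Sa in ea sa0.
set sb := Num.sqrt Sb in eb sb0.
have hsa : sa <= u 0 ord0 by nra.
have hsb : sb <= v 0 ord0 by nra.
have Q1 := Q sb sa.
have [sa_pos|] := ltP 0 sa; last first.
  move=> sale; have sa_eq : sa = 0 by apply/eqP; rewrite eq_le sale sa0.
  have SaE : Sa = 0 by rewrite -ea sa_eq; ring.
  have Q2 := Q (- (Sb + 1)) Sxy.
  rewrite SaE in Q2.
  have : Sxy = 0 by nra.
  move=> ->; nra.
have [sb_pos|] := ltP 0 sb; last first.
  move=> sble; have sb_eq : sb = 0 by apply/eqP; rewrite eq_le sble sb0.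
  have SbE : Sb = 0 by rewrite -eb sb_eq; ring.
  have Q2 := Q Sxy (- (Sa + 1)).
  rewrite SbE in Q2.
  have : Sxy = 0 by nra.
  move=> ->; nra.
rewrite -ea -eb in Q1.
have : sa * sb * (sa * sb + Sxy) >= 0 by nra.
have sp : 0 < sa * sb by apply: mulr_gt0.
rewrite pmulr_rge0 // => h1.
have h2 : sa * sb <= u 0 ord0 * v 0 ord0 by apply: ler_pM.
lra.
Qed.


Lemma unit_cone (R : realType) m (v : 'rV[R]_m.+1) :
  lorentz_cone v -> rv_dot v v = 1 -> 1 <= 2 * v 0 ord0 ^+ 2.
Proof.
move=> /cone_facts [h0 h1]; rewrite dot_split => e.
nra.
Qed.

Lemma e_dot (R : realType) m (v : 'rV[R]_m.+1) :
  \sum_(k < m.+1) (k == ord0)%:R * v 0 k = v 0 ord0.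
Proof.
rewrite big_ord_recl eqxx mul1r big1 ?addr0 // => i _.
by rewrite eq_sym (negbTE (neq_lift ord0 i)) mul0r.
Qed.

Lemma no_orth3 (R : realType) m (a b c : 'rV[R]_m.+1) :
  lorentz_cone a -> lorentz_cone b -> lorentz_cone c ->
  rv_dot a a = 1 -> rv_dot b b = 1 -> rv_dot c c = 1 ->
  rv_dot a b = 0 -> rv_dot a c = 0 -> rv_dot b c = 0 -> False.
Proof.
move=> ca cb cc aa bb ccc ab ac bc.
have ha := unit_cone ca aa; have hb := unit_cone cb bb; have hc := unit_cone cc ccc.
set a0 := a 0 ord0 in ha; set b0 := b 0 ord0 in hb; set c0 := c 0 ord0 in hc.
pose e (k : 'I_m.+1) : R := (k == ord0)%:R.
have ee : \sum_(k < m.+1) e k * e k = 1.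
  rewrite big_ord_recl /e eqxx mulr1 big1 ?addr0 // => i _.
  by rewrite eq_sym (negbTE (neq_lift ord0 i)) mul0r.
have ea : \sum_(k < m.+1) e k * a 0 k = a0 by apply: e_dot.
have eb : \sum_(k < m.+1) e k * b 0 k = b0 by apply: e_dot.
have ec : \sum_(k < m.+1) e k * c 0 k = c0 by apply: e_dot.
have S0 : 0 <= \sum_(k < m.+1) (e k - a0 * a 0 k - b0 * b 0 k - c0 * c 0 k) ^+ 2.
  by apply: sumr_ge0 => i _; apply: sqr_ge0.
have SE : \sum_(k < m.+1) (e k - a0 * a 0 k - b0 * b 0 k - c0 * c 0 k) ^+ 2 =
  (\sum_(k < m.+1) e k * e k) + (- 2 * a0) * (\sum_(k < m.+1) e k * a 0 k)
  + (- 2 * b0) * (\sum_(k < m.+1) e k * b 0 k)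
  + (- 2 * c0) * (\sum_(k < m.+1) e k * c 0 k)
  + a0 ^+ 2 * rv_dot a a + b0 ^+ 2 * rv_dot b b + c0 ^+ 2 * rv_dot c c
  + (2 * a0 * b0) * rv_dot a b + (2 * a0 * c0) * rv_dot a c
  + (2 * b0 * c0) * rv_dot b c.
  rewrite /rv_dot !mulr_sumr -!big_split /=; apply: eq_bigr => i _; ring.
rewrite SE ee ea eb ec aa bb ccc ab ac bc in S0.
nra.
Qed.


Lemma I2_cases (i : 'I_2) : i = 0 \/ i = 1.
Proof.
case: i => [[|[|k]] Hk]; [left|right|]; try (by apply: val_inj).
by [].
Qed.

Lemma dotC (R : realType) m (u v : 'rV[R]_m.+1) : rv_dot u v = rv_dot v u.
Proof. by apply: eq_bigr => i _; rewrite mulrC. Qed.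

Definition gl2_prop (R : realType) (M : 'M[R]_2) : Prop :=
  M 0 1 = M 1 0 /\ 0 <= M 0 1 /\
  forall x y, 0 <= x^+2 * M 0 0 + 2 * x * y * M 0 1 + y^+2 * M 1 1.

Lemma gl2_nec (R : realType) (M : 'M[R]_2) : gram_lorentz M -> gl2_prop M.
Proof.
move=> [m [l [cl hl]]]; split; first by rewrite !hl dotC.
split; first by rewrite hl; apply: cone_dot_ge0.
move=> x y; rewrite !hl.
exact: (@quad_nonneg R m.+1 (fun k => l 0 0 k) (fun k => l 1 0 k) x y).
Qed.

Lemma gl2_suff (R : realType) (M : 'M[R]_2) : gl2_prop M -> gram_lorentz M.
Proof.
move=> [hs [hq hQ]].
set p := M 0 0 in hQ; set q := M 0 1 in hs hq hQ; set r := M 1 1 in hQ.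
have p0 : 0 <= p by have := hQ 1 0; lra.
have r0 : 0 <= r by have := hQ 0 1; lra.
have pq : 0 <= p * (p * r - q ^+ 2) by have := hQ q (- p); nra.
pose a := Num.sqrt (p / 2).
have a0 : 0 <= a := sqrtr_ge0 _.
have ha : a ^+ 2 = p / 2 by rewrite sqr_sqrtr //; lra.
pose b := q / (2 * a).
have b0 : 0 <= b by apply: divr_ge0 => //; lra.
have [pz|ppos] := eqVneq p 0.
  have qz : q = 0.
    have := hQ (- (r + 1)) q; rewrite pz => h.
    have : q ^+ 2 * (r + 2) <= 0 by nra.
    nra.
  have az : a = 0 by rewrite /a pz mul0r sqrtr0.
  have bz : b = 0 by rewrite /b qz mul0r.
  pose c := Num.sqrt (r / 2).
  have c0 : 0 <= c := sqrtr_ge0 _.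
  have hc : c ^+ 2 = r / 2 by rewrite sqr_sqrtr //; lra.
  exists 1%N, (fun i : 'I_2 => if i == 0 then (0 : 'rV[R]_2) else \row_k c).
  split.
    by move=> i; case: (i == 0); rewrite /lorentz_cone big_ord1 !mxE sqrtr_sqr ger0_norm.
  move=> i j; case: (I2_cases i) => ->; case: (I2_cases j) => ->;
    rewrite /= /rv_dot big_ord_recl big_ord1 !mxE /= -/p -/q -/r -?hs ?pz ?qz; nra.
have ppos' : 0 < p by rewrite lt_def ppos p0.
have apos : 0 < a by rewrite /a sqrtr_gt0; lra.
have hb : b * (2 * a) = q by rewrite /b divfK //; lra.
have rb : 0 <= r / 2 - b ^+ 2.
  have h1 : 0 <= p * r - q ^+ 2 by move: pq; rewrite pmulr_rge0.
  have h2 : q ^+ 2 = 2 * p * b ^+ 2.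
    rewrite -hb.
    have -> : (b * (2 * a)) ^+ 2 = 4 * b ^+ 2 * a ^+ 2 by ring.
    by rewrite ha; field.
  have : 0 <= p * (r - 2 * b ^+ 2) by rewrite h2 in h1; move: h1; congr (0 <= _); ring.
  rewrite pmulr_rge0 //; lra.
pose c := Num.sqrt (r / 2 - b ^+ 2).
have c0 : 0 <= c := sqrtr_ge0 _.
have hc : c ^+ 2 = r / 2 - b ^+ 2 by rewrite sqr_sqrtr.
exists 1%N, (fun i : 'I_2 => if i == 0 then \row_k a
   else \row_k (b + (if k == ord0 then c else - c))).
split.
  move=> i; case: (i == 0); rewrite /lorentz_cone big_ord1 !mxE.
    by rewrite sqrtr_sqr ger0_norm.
  rewrite eq_sym (negbTE (neq_lift _ _)) eqxx sqrtr_sqr ler_norml; apply/andP; split; lra.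
move=> i j; case: (I2_cases i) => ->; case: (I2_cases j) => ->;
  rewrite /= /rv_dot big_ord_recl big_ord1 !mxE /= -/p -/q -/r -?hs; nra.
Qed.

Unset Implicit Arguments.

Theorem lemma4p6 (R : realType) (n : nat) (hn : (1 <= n)%N) :
  convex_mxset (@gram_lorentz R n) <-> (n <= 2)%N.
Proof.
case: n hn => [|[|[|n]]] hn //; split => // hc.
-
  move=> X Y t [mx [lx [cx hx]]] [my [ly [cy hy]]] t0 t1.
  set z := ((1 - t) *: X + t *: Y) ord0 ord0.
  have z0 : 0 <= z.
    rewrite /z !mxE hx hy; apply: addr_ge0; apply: mulr_ge0; try lra;
      apply: sumr_ge0 => k _; rewrite -expr2; apply: sqr_ge0.
  exists 0%N, (fun _ => \row_k Num.sqrt z); split.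
    by move=> i; rewrite /lorentz_cone big_ord0 sqrtr0 mxE sqrtr_ge0.
  move=> i j; rewrite !ord1 /rv_dot big_ord1 !mxE -expr2 sqr_sqrtr // /z !mxE.
  by congr (_ * X _ _ + _ * Y _ _); apply: val_inj.
-
  move=> X Y t /gl2_nec [sx [qx Qx]] /gl2_nec [sy [qy Qy]] t0 t1.
  apply: gl2_suff; split; first by rewrite !mxE sx sy.
  split; first by rewrite !mxE; apply: addr_ge0; apply: mulr_ge0 => //; lra.
  move=> x y; rewrite !mxE.
  have := Qx x y; have := Qy x y.
  set A := _ + _ + _; set B := _ + _ + _ => hA hB.
  have e : 0 <= (1 - t) * B + t * A by apply: addr_ge0; apply: mulr_ge0 => //; lra.
  by move: e; congr (0 <= _); rewrite /A /B; ring.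
-
  exfalso.
  pose lX (i : 'I_n.+3) : 'rV[R]_2 := \row_k
     ((val i == 0)%N%:R + (val i == 1)%N%:R * (if k == ord0 then 1 else -1)).
  pose lY (i : 'I_n.+3) : 'rV[R]_2 := \row_k ((val i == 2)%N%:R).
  pose X : 'M[R]_n.+3 := \matrix_(i, j) rv_dot (lX i) (lX j).
  pose Y : 'M[R]_n.+3 := \matrix_(i, j) rv_dot (lY i) (lY j).
  have gX : gram_lorentz X.
    exists 1%N, lX; split; last by move=> i j; rewrite mxE.
    move=> i; rewrite /lorentz_cone big_ord1 !mxE [lift _ _ == _]eq_sym (negbTE (neq_lift _ _)) eqxx.
    rewrite sqrtr_sqr ler_norml.
    have h0 : 0 <= (val i == 0)%N%:R :> R := ler0n _ _.
    have h1 : 0 <= (val i == 1)%N%:R :> R := ler0n _ _.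
    apply/andP; split; lra.
  have gY : gram_lorentz Y.
    exists 1%N, lY; split; last by move=> i j; rewrite mxE.
    by move=> i; rewrite /lorentz_cone big_ord1 !mxE sqrtr_sqr ger0_norm ?ler0n.
  have h12 : (0 : R) <= 1 / 2 by lra.
  have h12' : (1 / 2 : R) <= 1 by lra.
  have [m [l [cl hl]]] := hc X Y (1 / 2) gX gY h12 h12'.
  pose i0 : 'I_n.+3 := Ordinal (isT : (0 < n.+3)%N).
  pose i1 : 'I_n.+3 := Ordinal (isT : (1 < n.+3)%N).
  pose i2 : 'I_n.+3 := Ordinal (isT : (2 < n.+3)%N).
  have E : forall i j, rv_dot (l i) (l j) = (1 - 1/2) * X i j + 1/2 * Y i j.
    by move=> i j; rewrite -hl !mxE.
  apply: (@no_orth3 R m (l i0) (l i1) (l i2)) => //; rewrite E !mxE /rv_dot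
    ?big_ord_recl ?big_ord0 ?big_ord1 !mxE /=; lra.
Qed.
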